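(* Let $d\ge3$ be an integer and $\nu>0$. Let $(\hat Z_t)_{t\ge0}$ be the continuous-time Markov chain on $\mathbb N_0\cup\{\dagger\}$ with transition rates $\hat r(i,i+1)=2\frac{d-1}{d}$ for $i\ge1$, $\hat r(i,i-1)=\frac2d$ for $i\ge1$, $\hat r(0,1)=2$, $\hat r(i,\dagger)=\nu i$ for $i\in\mathbb N_0$, and all other rates zero (so $\dagger$ is absorbing). Define the collision local time $$R_{d,\nu}(i)=\mathsf E\Big[\int_0^\infty\mathbf 1_{\{\hat Z_t=0\}}\,{\rm d}t\ \Big|\ \hat Z_0=i\Big].$$ Then $R_{d,\nu}(0)=\dfrac{1}{2\vartheta_{d,\nu}}$.
   Context: $\beta_d=\sqrt{d-1}$, $\rho_d=2\sqrt{d-1}/d$; $\Delta_{d,\nu}$ is the continued fraction $\Delta_{d,\nu}=\cfrac{1}{a_1-\cfrac{1}{a_2-\cfrac{1}{a_3-\cdots}}}$ with $a_i=\frac{2+i\nu}{\rho_d}$; and $\vartheta_{d,\nu}=1-\Delta_{d,\nu}/\beta_d$. (The chain $\hat Z$ models the distance of two independent rate-1 random walks on the infinite $d$-regular tree whose connecting path's edges each disappear at rate $\nu$, $\dagger$ representing disconnection.) *)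

(* Defs.v *)
From HB Require Import structures.
From mathcomp Require Import all_boot all_order all_algebra.
From mathcomp Require Import all_classical all_reals all_analysis.
Set Implicit Arguments. Unset Strict Implicit. Unset Printing Implicit Defensive.
Import Order.TTheory GRing.Theory Num.Theory.
Import numFieldNormedType.Exports.
Local Open Scope classical_set_scope.
Local Open Scope ring_scope.

(* State space N_0 ∪ {†}: [Some i] is the state i, [None] is † (dagger). *)
Definition state := option nat.

Section Chain.
Variables (R : realType) (d : nat) (nu : R).

Definition beta_d : R := Num.sqrt (d%:R - 1).
Definition rho_d : R := 2 * Num.sqrt (d%:R - 1) / d%:R.
Definition cf_a (i : nat) : R := (2 + i%:R * nu) / rho_d.

(* cf_tail n k = 1/(a_k - 1/(a_{k+1} - ... - 1/a_{k+n-1})), cf_tail 0 k = 0 *)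
Fixpoint cf_tail (n k : nat) : R :=
  if n is n'.+1 then (cf_a k - cf_tail n' k.+1)^-1 else 0.
Definition Delta_conv (n : nat) : R := cf_tail n 1.
Definition Delta_dnu : R := lim (Delta_conv @ \oo).
Definition theta_dnu : R := 1 - Delta_dnu / beta_d.

Definition rhat (s s' : state) : R :=
  match s, s' with
  | Some 0, Some j => if j == 1%N then 2 else 0
  | Some i.+1, Some j =>
      if j == i.+2 then 2 * (d%:R - 1) / d%:R
      else if j == i then 2 / d%:R else 0
  | Some i, None => nu * i%:R
  | None, _ => 0
  end.

(* total jump rate q(s) = sum_{s' <> s} r^(s, s') *)
Definition qtot (s : state) : R :=
  match s with
  | Some 0 => 2
  | Some i.+1 => 2 + nu * i.+1%:R
  | None => 0
  end.

Local Open Scope ereal_scope.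

(* f n s j t = P_s(Z^_t = j and exactly n jumps occurred in [0,t]),
   defined by the first-jump decomposition. *)
Fixpoint njump_prob (n : nat) (s j : state) (t : R) : \bar R :=
  match n with
  | 0 => if s == j then (expR (- qtot s * t))%:E else 0
  | n'.+1 =>
      \int[lebesgue_measure]_(u in `[0%R, t]%classic)
        \esum_(k in [set k | k != s])
          ((rhat s k * expR (- qtot s * u))%:E * njump_prob n' k j (t - u))
  end.

(* (minimal) transition function of the chain: p_t(s, j) = P_s(Z^_t = j) *)
Definition trans_prob (t : R) (s j : state) : \bar R :=
  \sum_(0 <= n <oo) njump_prob n s j t.

(* collision local time R_{d,nu}(i) = E_i[ int_0^oo 1{Z^_t = 0} dt ]
   = int_0^oo P_i(Z^_t = 0) dt   (Tonelli) *)
Definition collision_local_time (i : nat) : \bar R :=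
  \int[lebesgue_measure]_(t in `[0%R, +oo[%classic) trans_prob t (Some i) (Some 0%N).

End Chain.

(* Main.v *)
Require Import Defs.
From HB Require Import structures.
From mathcomp Require Import all_boot all_order all_algebra.
From mathcomp Require Import all_classical all_reals all_analysis.
From mathcomp Require Import measurable_realfun.
From mathcomp Require Import zify ring lra.
Import Order.TTheory GRing.Theory Num.Theory.
Import numFieldNormedType.Exports.
Local Open Scope classical_set_scope.
Local Open Scope ring_scope.

Module T1.
Section Shift.
Context {R : realType}.
Local Notation mu := (@lebesgue_measure R).
Local Open Scope ereal_scope.

Lemma measurable_shift (c : R) : measurable_fun setT ((fun x : measurableTypeR R => (x + c)%R) : measurableTypeR R -> measurableTypeR R).
Proof. by apply: measurable_funD => //; exact: measurable_cst. Qed.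

Lemma lebesgue_measure_shift (c : R) (A : set R) : measurable A ->
  pushforward mu ((fun x : measurableTypeR R => (x + c)%R) : measurableTypeR R -> measurableTypeR R) A = mu A.
Proof.
move=> mA; apply/esym/lebesgue_measure_unique => //; first exact: measurable_shift.
move=> mf X [[a b]] _ <-.
transitivity (mu `](a - c)%R, (b - c)%R]); last first.
  rewrite /pushforward /=; congr (mu _).
  by apply/seteqP; split => x /=; rewrite !in_itv /= ?ltrBlDr ?lerBrDr ?ltrBrDr ?lerBlDr.
rewrite !lebesgue_measure_itv/= !lte_fin ltrD2r.
case: ifP => // _; rewrite -!EFinD; congr (_%:E); by rewrite opprB addrA subrK.
Qed.

Lemma ge0_integral_shift (h : R -> \bar R) (u : R) :
  measurable_fun setT h -> (forall x, 0 <= h x) ->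
  \int[mu]_(t in `[u, +oo[) h (t - u)%R = \int[mu]_(s in `[0%R, +oo[) h s.
Proof.
move=> mh h0.
have -> : `[u, +oo[%classic = ((fun x : measurableTypeR R => (x + - u)%R) : measurableTypeR R -> measurableTypeR R) @^-1` `[0%R, +oo[.
  by apply/seteqP; split => x /=; rewrite !in_itv /= !andbT subr_ge0.
rewrite -(ge0_integral_pushforward (measurable_shift (- u)))//; last first.
  exact: measurable_funS mh.
apply: eq_measure_integral => //=; first exact: measurable_shift.
move=> mf A mA _; rewrite /pushforward.
by have := @lebesgue_measure_shift (- u) A mA; rewrite /pushforward => ->.
Qed.

Lemma integral_indic_mul (D : set R) (F : R -> \bar R) :
  \int[mu]_t ((\1_D t)%:E * F t) = \int[mu]_(t in D) F t.
Proof.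
rewrite [RHS]integral_mkcond; apply: eq_integral => t _.
by rewrite patchE indicE; case: (t \in D); rewrite ?mul1e ?mul0e.
Qed.

Definition ind0 (x : R) : \bar R := (\1_(`[0%R, +oo[%classic : set R) x)%:E.

Lemma ind0_ge0 x : 0 <= ind0 x.
Proof. by rewrite /ind0 lee_fin indicE. Qed.

Lemma measurable_ind0 : measurable_fun setT ind0.
Proof. by apply/measurable_EFinP; apply: measurable_indic. Qed.

Definition conv (g h : R -> \bar R) (t : R) :=
  \int[mu]_(u in `[0%R, t]) (g u * h (t - u)%R).

Definition Phi (g h : R -> \bar R) (p : R * R) : \bar R :=
  ind0 p.2 * ind0 (p.1 - p.2)%R * (g p.2 * h (p.1 - p.2)%R).

Variables (g h : R -> \bar R).
Hypotheses (mg : measurable_fun setT g) (mh : measurable_fun setT h).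
Hypotheses (g0 : forall x, 0 <= g x) (h0 : forall x, 0 <= h x).

Lemma measurable_Phi : measurable_fun setT (Phi g h).
Proof.
have mB : measurable_fun setT (fun p : R * R => (p.1 - p.2)%R).
  by apply: measurable_funB; [exact: measurable_fst|exact: measurable_snd].
apply: emeasurable_funM; first apply: emeasurable_funM.
- exact: measurableT_comp measurable_ind0 measurable_snd.
- exact: measurableT_comp measurable_ind0 mB.
apply: emeasurable_funM.
- exact: measurableT_comp mg measurable_snd.
- exact: measurableT_comp mh mB.
Qed.

Lemma Phi_ge0 p : 0 <= Phi g h p.
Proof. by rewrite /Phi !mule_ge0 ?ind0_ge0. Qed.

Lemma convE t : conv g h t = \int[mu]_u Phi g h (t, u).
Proof.
rewrite /conv integral_mkcond; apply: eq_integral => u _.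
rewrite patchE /Phi /ind0 !indicE /= !mem_setE !in_itv /= !andbT subr_ge0.
by case: (0 <= u)%R; case: (u <= t)%R; rewrite ?mul1e ?mul0e.
Qed.


Lemma measurable_conv : measurable_fun setT (conv g h).
Proof.
rewrite (_ : conv g h = fubini_F mu (Phi g h)).
  exact: (@measurable_fun_fubini_tonelli_F _ _ _ _ _ mu (Phi g h) measurable_Phi Phi_ge0).
by apply/funext => t; rewrite convE.
Qed.

Lemma conv_ge0 t : 0 <= conv g h t.
Proof. by apply: integral_ge0 => u _; rewrite mule_ge0. Qed.

Lemma integral_conv :
  \int[mu]_(t in `[0%R, +oo[) conv g h t =
  \int[mu]_(t in `[0%R, +oo[) g t * \int[mu]_(t in `[0%R, +oo[) h t.
Proof.
have -> : \int[mu]_(t in `[0%R, +oo[) conv g h t = \int[mu]_t conv g h t.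
  rewrite integral_mkcond; apply: eq_integral => t _; rewrite patchE.
  case: ifP => // /negbT; rewrite mem_setE in_itv /= andbT -ltNge => t0.
  by rewrite /conv set_itv_ge ?integral_set0// bnd_simp -ltNge.
under eq_integral do rewrite convE.
rewrite (@fubini_tonelli _ _ _ _ _ mu mu (Phi g h) measurable_Phi Phi_ge0) /=.
transitivity (\int[mu]_u ((ind0 u * g u) * \int[mu]_(t in `[0%R, +oo[) h t)).
  apply: eq_integral => u _.
  rewrite /Phi /=.
  under eq_integral do rewrite (muleACA (ind0 u)).
  rewrite ge0_integralZl //; last by rewrite mule_ge0 ?ind0_ge0.
  - congr (_ * _).
    rewrite -(ge0_integral_shift h u mh h0) -integral_indic_mul.
    apply: eq_integral => t _; congr (_ * _).
    by rewrite /ind0 !indicE !mem_setE !in_itv /= !andbT subr_ge0.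
  - apply: emeasurable_funM.
      apply: measurableT_comp measurable_ind0 _.
      by apply: measurable_funB => //; exact: measurable_cst.
    apply: measurableT_comp mh _.
    by apply: measurable_funB => //; exact: measurable_cst.
  - by move=> t _; rewrite mule_ge0 ?ind0_ge0.
rewrite ge0_integralZr //; last first.
- by apply: integral_ge0.
- by move=> u _; rewrite mule_ge0 ?ind0_ge0.
- exact: emeasurable_funM measurable_ind0 mg.
by congr (_ * _); exact: (integral_indic_mul `[0%R, +oo[%classic g).
Qed.

End Shift.
End T1.
Import T1.

Module T2.
Section Esum.
Context {R : realType} {T : choiceType}.
Local Open Scope ereal_scope.

Lemma esum_1pt (A : set T) (F : T -> \bar R) x : A x ->
  (forall k, A k -> 0 <= F k) -> (forall k, A k -> k != x -> F k = 0) ->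
  \esum_(k in A) F k = F x.
Proof.
move=> Ax F0 Fz; rewrite (esumID [set x]) //.
have -> : A `&` [set x] = [set x].
  by apply/seteqP; split => [k [] //|k ->].
rewrite esum_set1 ?F0 // esum1 ?adde0 // => k [Ak /= kx].
by apply: Fz => //; apply/eqP.
Qed.

Lemma esum_2pt (A : set T) (F : T -> \bar R) x y : x != y -> A x -> A y ->
  (forall k, A k -> 0 <= F k) -> (forall k, A k -> k != x -> k != y -> F k = 0) ->
  \esum_(k in A) F k = F x + F y.
Proof.
move=> xy Ax Ay F0 Fz; rewrite (esumID [set x]) //.
have -> : A `&` [set x] = [set x].
  by apply/seteqP; split => [k [] //|k ->].
rewrite esum_set1 ?F0 //; congr (_ + _).
apply: esum_1pt.
- by split => //= yx; move: xy; rewrite yx eqxx.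
- by move=> k [] /F0.
- by move=> k [Ak /= kx] ky; apply: Fz => //; apply/eqP.
Qed.
End Esum.

Section ChainA.
Context {R : realType} (d : nat) (nu : R).
Hypothesis nu0 : (0 <= nu)%R.
Hypothesis d1 : (1 <= d)%N.
Local Open Scope ereal_scope.

Local Notation f n s := (njump_prob d nu n s (Some 0%N)).

Lemma rhat_ge0 s k : (0 <= rhat d nu s k)%R.
Proof.
have h1 : (0 <= 2 * (d%:R - 1) / d%:R :> R)%R.
  by rewrite divr_ge0 // mulr_ge0 // subr_ge0 ler1n.
case: s => [[|i]|]; case: k => [j|] //=; rewrite ?mulr_ge0 ?ler0n //;
  repeat case: ifP => _ //; rewrite ?divr_ge0 ?ler0n.
Qed.

Lemma nj_ge0 n s j t : 0 <= njump_prob d nu n s j t.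
Proof.
elim: n s t => [|n IH] s t /=.
  by case: ifP => _; rewrite ?lee_fin ?expR_ge0.
apply: integral_ge0 => u _; apply: esum_ge0 => k _.
by rewrite mule_ge0 // lee_fin mulr_ge0 ?rhat_ge0 ?expR_ge0.
Qed.

Lemma nj_None n t : f n None t = 0.
Proof.
case: n => [|n] //=.
rewrite (eq_integral (fun _ => 0)); first exact: integral0.
by move=> u _; apply: esum1 => k _; rewrite mul0r mul0e.
Qed.

Definition up (i : nat) : R := rhat d nu (Some i) (Some i.+1).
Definition dn (i : nat) : R := if i is i'.+1 then rhat d nu (Some i) (Some i') else 0%R.
Definition qq (i : nat) : R := qtot nu (Some i).

Lemma esum_step n i t u :
  \esum_(k in [set k | k != Some i])
     ((rhat d nu (Some i) k * expR (- qtot nu (Some i) * u))%:E * f n k (t - u)%R)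
  = (up i * expR (- qq i * u))%:E * f n (Some i.+1) (t - u)%R +
    (dn i * expR (- qq i * u))%:E * f n (Some i.-1) (t - u)%R.
Proof.
have F0 : forall k, [set k | k != Some i] k ->
   0 <= (rhat d nu (Some i) k * expR (- qtot nu (Some i) * u))%:E * f n k (t - u)%R.
  by move=> k _; rewrite mule_ge0 ?nj_ge0 // lee_fin mulr_ge0 ?rhat_ge0 ?expR_ge0.
case: i F0 => [|m] F0.
  rewrite /dn mul0r mul0e adde0; apply: esum_1pt => //.
  move=> [[|[|j]]|] //= _ _; rewrite ?mulr0 ?mul0r ?mul0e //.
rewrite /dn /up; apply: esum_2pt => //=.
- by apply/eqP => -[]; lia.
- by apply/eqP => -[]; lia.
- by apply/eqP => -[]; lia.
move=> [j|] _; last by rewrite nj_None mule0.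
move=> hj1 hj2; rewrite /=.
have -> : (j == m.+2) = false by apply/negbTE; apply: contra hj1 => /eqP ->.
have -> : (j == m) = false by apply/negbTE; apply: contra hj2 => /eqP ->.
by rewrite mul0r mul0e.
Qed.

Lemma meas_cexp (c q : R) : measurable_fun setT (fun u : R => (c * expR (- q * u))%:E).
Proof.
apply/measurable_EFinP; apply: measurable_funM; first exact: measurable_cst.
apply: measurableT_comp; first exact: measurable_expR.
by apply: measurable_funM => //; exact: measurable_cst.
Qed.

Lemma meas_shiftB (t : R) : measurable_fun setT (fun u : R => (t - u)%R).
Proof. by apply: measurable_funB => //; exact: measurable_cst. Qed.

Definition Aup i (u : R) : \bar R := (up i * expR (- qq i * u))%:E.
Definition Adn i (u : R) : \bar R := (dn i * expR (- qq i * u))%:E.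

Lemma Aup_ge0 i u : 0 <= Aup i u.
Proof. by rewrite lee_fin mulr_ge0 ?rhat_ge0 ?expR_ge0. Qed.
Lemma Adn_ge0 i u : 0 <= Adn i u.
Proof.
rewrite lee_fin mulr_ge0 ?expR_ge0 //; case: i => [|i]; rewrite /dn ?lexx //.
exact: rhat_ge0.
Qed.

Lemma nj_stepE n i t : f n.+1 (Some i) t =
  \int[lebesgue_measure]_(u in `[0%R, t]) (Aup i u * f n (Some i.+1) (t - u)%R +
                                       Adn i u * f n (Some i.-1) (t - u)%R).
Proof. by rewrite /=; apply: eq_integral => u _; rewrite esum_step. Qed.

Lemma nj_meas_step n i (mf : forall s, measurable_fun setT (f n s)) :
  f n.+1 (Some i) = conv (Aup i) (f n (Some i.+1)) \+ conv (Adn i) (f n (Some i.-1)).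
Proof.
apply/funext => t; rewrite nj_stepE /conv /= ge0_integralD //.
- by move=> u _; rewrite mule_ge0 ?Aup_ge0 ?nj_ge0.
- apply: measurable_funTS; apply: emeasurable_funM; first exact: meas_cexp.
  exact: measurableT_comp (mf _) (meas_shiftB t).
- by move=> u _; rewrite mule_ge0 ?Adn_ge0 ?nj_ge0.
- apply: measurable_funTS; apply: emeasurable_funM; first exact: meas_cexp.
  exact: measurableT_comp (mf _) (meas_shiftB t).
Qed.

Lemma nj_meas n s : measurable_fun setT (f n s).
Proof.
elim: n s => [|n IH] s.
  rewrite /=; case: (s == Some 0%N).
    rewrite (_ : (fun t => _) = (fun t : R => (1 * expR (- qtot nu s * t))%:E)).
      exact: meas_cexp.
    by apply/funext => t; rewrite mul1r.
  exact: measurable_cst.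
case: s => [i|].
  rewrite nj_meas_step //; apply: emeasurable_funD.
    apply: measurable_conv => //; [exact: meas_cexp|exact: Aup_ge0|exact: nj_ge0].
  apply: measurable_conv => //; [exact: meas_cexp|exact: Adn_ge0|exact: nj_ge0].
rewrite (_ : f n.+1 None = cst 0); first exact: measurable_cst.
by apply/funext => t; rewrite nj_None.
Qed.


Lemma int_exp (c q : R) : (0 < q)%R -> (0 <= c)%R ->
  \int[lebesgue_measure]_(u in `[0%R, +oo[) (c * expR (- q * u))%:E = (c / q)%:E.
Proof.
move=> q0 c0.
have H1 : \int[lebesgue_measure]_(u in `[0%R, +oo[) (q * expR (- q * u))%:E = 1.
  rewrite -(integral_exponential_pdf q0) [LHS]integral_mkcond.
  apply: eq_integral => x _; rewrite patchE; case: ifP => xin.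
    by rewrite exponential_pdfE //; move: xin; rewrite mem_setE in_itv /= andbT.
  rewrite lt0_exponential_pdf //; move/negbT: xin.
  by rewrite mem_setE in_itv /= andbT -ltNge.
transitivity (\int[lebesgue_measure]_(u in `[0%R, +oo[) ((c / q)%:E * (q * expR (- q * u))%:E)).
  apply: eq_integral => u _; rewrite -EFinM; congr (_%:E).
  by rewrite mulrA divfK // gt_eqF.
rewrite ge0_integralZl //.
- by rewrite H1 mule1.
- exact: measurable_funTS (meas_cexp _ _).
- by move=> u _; rewrite lee_fin mulr_ge0 ?expR_ge0 // ltW.
- by rewrite lee_fin divr_ge0 // ltW.
Qed.

Lemma qq_gt0 i : (0 < qq i)%R.
Proof.
case: i => [|i]; rewrite /qq /=; first by [].
by rewrite ltr_wpDr // mulr_ge0.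
Qed.

Definition II n i := \int[lebesgue_measure]_(t in `[0%R, +oo[) f n (Some i) t.

Lemma II_step n i : II n.+1 i =
  (up i / qq i)%:E * II n i.+1 + (dn i / qq i)%:E * II n i.-1.
Proof.
have mf := nj_meas n.
rewrite /II nj_meas_step // ge0_integralD //.
- rewrite !integral_conv //; try exact: meas_cexp; try exact: nj_ge0;
    try exact: Aup_ge0; try exact: Adn_ge0.
  rewrite /Aup /Adn !int_exp ?qq_gt0 //.
    by case: i => [|i]; rewrite /dn ?lexx //; exact: rhat_ge0.
  exact: rhat_ge0.
- by move=> t _; apply: conv_ge0; [exact: Aup_ge0|exact: nj_ge0].
- apply: measurable_funTS; apply: measurable_conv => //;
    [exact: meas_cexp|exact: Aup_ge0|exact: nj_ge0].
- by move=> t _; apply: conv_ge0; [exact: Adn_ge0|exact: nj_ge0].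
- apply: measurable_funTS; apply: measurable_conv => //;
    [exact: meas_cexp|exact: Adn_ge0|exact: nj_ge0].
Qed.

Lemma II_0 i : II 0 i = (if i == 0%N then 2^-1 else 0)%:E.
Proof.
rewrite /II /=; case: i => [|i] /=.
  have := @int_exp 1 2 (ltr0Sn _ 1) ler01; rewrite mul1r => <-.
  by apply: eq_integral => u _; rewrite mul1r.
exact: integral0.
Qed.


Definition pp i : R := up i / qq i.
Definition rr i : R := dn i / qq i.

Fixpoint MM n i : R :=
  if n is n'.+1 then pp i * MM n' i.+1 + rr i * MM n' i.-1 else (i == 0%N)%:R.

Lemma II_MM n i : II n i = (MM n i / 2)%:E.
Proof.
elim: n i => [|n IH] i.
  by rewrite II_0; case: i => [|i] /=; rewrite ?mul1r ?mul0r.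
rewrite II_step !IH -!EFinM -EFinD /=; congr (_%:E).
by rewrite /pp /rr mulrDl !mulrA.
Qed.

Lemma collision_series :
  collision_local_time d nu 0 = \sum_(0 <= n <oo) (MM n 0 / 2)%:E.
Proof.
rewrite /collision_local_time /trans_prob integral_nneseries //.
- by apply: eq_eseriesr => n _; rewrite -II_MM.
- by move=> n; exact: measurable_funTS (nj_meas n _).
- by move=> n t _; exact: nj_ge0.
Qed.

End ChainA.
End T2.
Import T2.

Module T3.
Lemma alg_key {R : realFieldType} (b dd q y1 y2 : R) : b != 0 -> dd != 0 -> q != 0 ->
  y1 * (q / (2 * b / dd) - y2) = 1 ->
  y1 / b = (2 * b ^+ 2 / dd / q) * (y1 / b) * (y2 / b) + (2 / dd) / q.
Proof.
move=> b0 dd0 q0 E.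
have key : y1 / b - ((2 * b ^+ 2 / dd / q) * (y1 / b) * (y2 / b) + (2 / dd) / q)
         = (2 / (dd * q)) * (y1 * (q / (2 * b / dd) - y2) - 1).
  by field; rewrite dd0 b0 q0.
by apply/eqP; rewrite -subr_eq0 key E subrr mulr0.
Qed.

Section ChainB.
Context {R : realType} (d : nat) (nu : R).
Hypothesis hd : (3 <= d)%N.
Hypothesis nu0 : (0 < nu)%R.

Let dpos : (0 < d%:R :> R).
Proof. by rewrite ltr0n; lia. Qed.

Let beta := beta_d R d.

Let dm1 : (0 <= d%:R - 1 :> R).
Proof. by rewrite subr_ge0 ler1n; lia. Qed.

Lemma beta_sq : beta ^+ 2 = d%:R - 1.
Proof. by rewrite /beta /beta_d sqr_sqrtr. Qed.

Lemma beta_ge0 : 0 <= beta.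
Proof. exact: sqrtr_ge0. Qed.

Lemma beta_gt1 : 1 < beta.
Proof.
have h : (1 : R) < d%:R - 1.
  rewrite ltrBrDr (_ : 1 + 1 = 2%:R) // ltr_nat; lia.
rewrite /beta /beta_d -[X in X < _]sqrtr1 ltr_sqrt //.
by apply: lt_trans h.
Qed.

Lemma rho_eq : rho_d R d = 2 * beta / d%:R.
Proof. by []. Qed.

Lemma rho_gt0 : 0 < rho_d R d.
Proof. by rewrite rho_eq divr_gt0 // mulr_gt0 // (lt_trans ltr01 beta_gt1). Qed.

Lemma rho_le1 : rho_d R d <= 1.
Proof.
rewrite rho_eq ler_pdivrMr // mul1r.
have : d%:R = beta ^+ 2 + 1 by rewrite beta_sq subrK.
move=> ->; have := sqr_ge0 (beta - 1); rewrite sqrrB1 => h.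
lra.
Qed.

Lemma cf_a_ge2 k : 2 <= cf_a d nu k.
Proof.
rewrite /cf_a ler_pdivlMr ?rho_gt0 //.
have h1 := rho_le1; have h2 : 0 <= k%:R * nu by rewrite mulr_ge0 // ltW.
lra.
Qed.


Local Notation t n k := (cf_tail d nu n k).

Lemma t_bounds n k : 0 <= t n k <= 1.
Proof.
elim: n k => [|n IH] k /=; first by rewrite lexx ler01.
have /andP[h0 h1] := IH k.+1; have h2 := cf_a_ge2 k.
have hp : 0 < cf_a d nu k - t n k.+1 by lra.
rewrite invr_ge0 (ltW hp) /= invf_le1 //; lra.
Qed.

Lemma t_den_ge1 n k : 1 <= cf_a d nu k - t n k.+1.
Proof. have /andP[h0 h1] := t_bounds n k.+1; have h2 := cf_a_ge2 k; lra. Qed.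

Lemma t_S n k : t n.+1 k = (cf_a d nu k - t n k.+1)^-1.
Proof. by []. Qed.

Lemma t_mono n k : t n k <= t n.+1 k.
Proof.
elim: n k => [|n IH] k.
  by have /andP[] := t_bounds 1 k.
rewrite (t_S n.+1 k) (t_S n k) lef_pV2 ?posrE.
- by have := IH k.+1; lra.
- by have := t_den_ge1 n k; lra.
- by have := t_den_ge1 n.+1 k; lra.
Qed.

Definition yy k := sup (range (fun n => t n k)).

Lemma t_ub k : has_ubound (range (fun n => t n k)).
Proof. by exists 1 => _ [n _ <-]; have /andP[] := t_bounds n k. Qed.

Lemma cvg_t k : (fun n => t n k) @ \oo --> yy k.
Proof.
apply: nondecreasing_cvgn; last exact: t_ub.
by apply/nondecreasing_seqP => n; exact: t_mono.
Qed.

Lemma yy_bounds k : 0 <= yy k <= 1.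
Proof.
apply/andP; split.
  have /andP[h0 _] := t_bounds 0 k.
  by apply: le_trans h0 _; apply: ub_le_sup; [exact: t_ub|exists 0%N].
by apply: ge_sup; [exists (t 0 k), 0%N|move=> _ [n _ <-]; have /andP[] := t_bounds n k].
Qed.

Lemma yy_rec k : yy k = (cf_a d nu k - yy k.+1)^-1.
Proof.
have h1 : (fun n => t n.+1 k) @ \oo --> yy k.
  by have := cvg_t k; rewrite -cvg_shiftS.
have hne : cf_a d nu k - yy k.+1 != 0.
  have /andP[_ h] := yy_bounds k.+1; have := cf_a_ge2 k => h2.
  by rewrite gt_eqF //; lra.
have h2 : (fun n => (cf_a d nu k - t n k.+1)^-1) @ \oo --> (cf_a d nu k - yy k.+1)^-1.
  apply: cvgV => //; apply: cvgB; [exact: cvg_cst|exact: cvg_t].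
exact: (cvg_unique _ h1 h2).
Qed.

Lemma Delta_yy : Delta_dnu d nu = yy 1.
Proof. exact: cvg_lim (cvg_t 1). Qed.


Local Notation pp := (pp d nu).
Local Notation rr := (rr d nu).
Local Notation MM := (MM d nu).

Lemma pp_0 : pp 0 = 1.
Proof. by rewrite /T2.pp /up /qq /= divff. Qed.

Lemma rr_0 : rr 0 = 0.
Proof. by rewrite /T2.rr /dn mul0r. Qed.

Lemma pp_S m : pp m.+1 = 2 * (d%:R - 1) / d%:R / (2 + nu * m.+1%:R).
Proof. by rewrite /T2.pp /up /qq /= eqxx. Qed.

Lemma rr_S m : rr m.+1 = 2 / d%:R / (2 + nu * m.+1%:R).
Proof.
rewrite /T2.rr /dn /qq /=.
have -> : (m == m.+2) = false by apply/negbTE; lia.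
by rewrite eqxx.
Qed.

Let q_pos m : 0 < 2 + nu * m.+1%:R.
Proof. by rewrite ltr_wpDr // mulr_ge0 // ltW. Qed.

Lemma pp_ge0 i : 0 <= pp i.
Proof. by case: i => [|m]; rewrite ?pp_0 ?pp_S // !divr_ge0 // ?mulr_ge0 // ltW. Qed.

Lemma rr_ge0 i : 0 <= rr i.
Proof. by case: i => [|m]; rewrite ?rr_0 ?rr_S // !divr_ge0 // ltW. Qed.

Definition lam : R := 2 / (2 + nu).

Lemma pr_le m : pp m.+1 + rr m.+1 <= lam.
Proof.
rewrite pp_S rr_S -mulrDl -mulrDl.
have -> : 2 * (d%:R - 1) + 2 = 2 * d%:R :> R by ring.
have h2nu : 0 < 2 + nu by have := nu0; lra.
rewrite mulrK ?unitfE ?gt_eqF // /lam.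
rewrite ler_pdivrMr // mulrC mulrA ler_pdivlMr //.
have : nu <= nu * m.+1%:R.
  by apply: ler_peMr; [exact: ltW|rewrite ler1n].
lra.
Qed.

Definition xx k := yy k / beta.

Lemma xx_bounds k : 0 <= xx k <= 1.
Proof.
have /andP[h0 h1] := yy_bounds k; have hb := beta_gt1.
rewrite /xx divr_ge0 //=; last by rewrite ltW // (lt_trans ltr01).
rewrite ler_pdivrMr ?(lt_trans ltr01) //; lra.
Qed.

Lemma xx1_lt1 : xx 1 < 1.
Proof.
have /andP[h0 h1] := yy_bounds 1; have hb := beta_gt1.
rewrite /xx ltr_pdivrMr ?(lt_trans ltr01) //; lra.
Qed.

Lemma xx_rec m : xx m.+1 = pp m.+1 * xx m.+1 * xx m.+2 + rr m.+1.
Proof.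
rewrite pp_S rr_S -beta_sq /xx.
have hb : beta != 0 by rewrite gt_eqF // (lt_trans ltr01 beta_gt1).
apply: alg_key => //; first by rewrite gt_eqF.
  by rewrite gt_eqF.
have E := yy_rec m.+1.
have hne : cf_a d nu m.+1 - yy m.+2 != 0.
  have /andP[_ h] := yy_bounds m.+2; have := cf_a_ge2 m.+1 => h2.
  by rewrite gt_eqF //; lra.
have -> : (2 + nu * m.+1%:R) / (2 * beta / d%:R) = cf_a d nu m.+1.
  by rewrite /cf_a rho_eq [nu * _]mulrC.
by rewrite E mulVf.
Qed.

Fixpoint phi i : R := if i is i'.+1 then phi i' * xx i else 1.

Lemma phi_bounds i : 0 <= phi i <= 1.
Proof.
elim: i => [|i IH] /=; first by rewrite ler01 lexx.
have /andP[h0 h1] := xx_bounds i.+1; case/andP: IH => h2 h3.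
rewrite mulr_ge0 //=; rewrite -[1]mulr1; exact: ler_pM.
Qed.

Definition C0 : R := (1 - xx 1)^-1.

Lemma C0_pos : 0 < C0.
Proof. by rewrite /C0 invr_gt0 subr_gt0 xx1_lt1. Qed.

Definition vv i := C0 * phi i.

Definition Pop (w : nat -> R) : nat -> R := fun i => pp i * w i.+1 + rr i * w i.-1.

Lemma vv_eq i : vv i = MM 0 i + Pop vv i.
Proof.
rewrite /Pop /vv; case: i => [|m] /=.
  rewrite pp_0 rr_0 mul1r mul0r addr0 mul1r.
  have h : C0 * (1 - xx 1) = 1 by rewrite mulVf // gt_eqF // subr_gt0 xx1_lt1.
  rewrite mulrBr mulr1 in h; lra.
rewrite add0r.
transitivity (C0 * phi m * (pp m.+1 * xx m.+1 * xx m.+2 + rr m.+1)).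
  by rewrite -xx_rec mulrA.
by ring.
Qed.


Lemma MM_iter n : MM n = iter n Pop (MM 0).
Proof. by elim: n => [|n IH] //=; rewrite -IH; apply/funext => i. Qed.

Lemma iter_lin N (a b : nat -> R) :
  iter N Pop (fun i => a i - b i) = (fun i => iter N Pop a i - iter N Pop b i).
Proof. by elim: N => [|N IH] //=; rewrite IH; apply/funext => i; rewrite /Pop; ring. Qed.

Lemma vv_decomp N i : vv i = \sum_(0 <= n < N) MM n i + iter N Pop vv i.
Proof.
elim: N i => [|N IH] i; first by rewrite big_geq // add0r.
have hP : Pop vv = (fun j => vv j - MM 0 j).
  by apply/funext => j; rewrite [in RHS](vv_eq j); ring.
rewrite big_nat_recr // iterSr hP iter_lin -MM_iter.
by rewrite {1}(IH i) -addrA [MM N i + _]addrC subrK.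
Qed.

Lemma lam_gt0 : 0 < lam.
Proof. by rewrite /lam divr_gt0 //; have := nu0; lra. Qed.

Lemma lam_lt1 : lam < 1.
Proof. by rewrite /lam ltr_pdivrMr; have := nu0; lra. Qed.

Definition mu := Num.sqrt lam.

Lemma mu_gt0 : 0 < mu.
Proof. by rewrite /mu sqrtr_gt0 lam_gt0. Qed.

Lemma mu_sq : mu * mu = lam.
Proof. by rewrite /mu -expr2 sqr_sqrtr // ltW // lam_gt0. Qed.

Lemma mu_lt1 : mu < 1.
Proof. by rewrite /mu -sqrtr1 ltr_sqrt // lam_lt1. Qed.

Definition Cb := C0 / mu.

Lemma iter_bound N i :
  0 <= iter N Pop vv i <= Cb * mu ^+ N * (if i == 0%N then 1 else mu).
Proof.
have hmu := mu_gt0; have hmu1 := mu_lt1; have hC := C0_pos.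
have hCb : 0 <= Cb by rewrite /Cb divr_ge0 // ltW.
elim: N i => [|N IH] i.
  rewrite /= /vv expr0 mulr1.
  have /andP[h0 h1] := phi_bounds i.
  rewrite mulr_ge0 ?(ltW hC) //=.
  have hCC : C0 <= Cb by rewrite /Cb ler_pdivlMr //; nra.
  have : C0 * phi i <= C0 by rewrite ler_piMr // ltW.
  case: (i == 0%N); first by rewrite mulr1; lra.
  by rewrite /Cb mulfVK ?gt_eqF.
have hK : 0 <= Cb * mu ^+ N by rewrite mulr_ge0 // exprn_ge0 // ltW.
have hw : forall j, 0 <= iter N Pop vv j <= Cb * mu ^+ N.
  move=> j; have /andP[h0 h1] := IH j; rewrite h0 /=; apply: le_trans h1 _.
  case: (j == 0%N); first by rewrite mulr1.
  by rewrite ler_piMr // ltW.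
rewrite iterS /Pop; case: i => [|m].
  rewrite pp_0 rr_0 mul1r mul0r addr0 eqxx mulr1.
  have /andP[h0 h1] := IH 1%N; rewrite h0 /= exprSr mulrA.
  by move: h1; rewrite /= .
have /andP[a0 a1] := hw m.+2; have /andP[b0 b1] := hw m.
have hp := pp_ge0 m.+1; have hr := rr_ge0 m.+1; have hpr := pr_le m.
have e : Cb * mu ^+ N.+1 * (if m.+1 == 0%N then 1 else mu) = (Cb * mu ^+ N) * lam.
  by rewrite /= exprSr -mu_sq !mulrA.
rewrite e; apply/andP; split; first by rewrite addr_ge0 // mulr_ge0.
have p1 := ler_wpM2l hp a1; have p2 := ler_wpM2l hr b1.
have p3 := ler_wpM2r hK hpr; rewrite mulrDl in p3.
rewrite [_ * lam]mulrC; lra.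
Qed.

Lemma S_cvg : (fun N => \sum_(0 <= n < N) MM n 0) @ \oo --> vv 0.
Proof.
have E : (fun N => \sum_(0 <= n < N) MM n 0) = (fun N => vv 0 - iter N Pop vv 0).
  by apply/funext => N; rewrite [in RHS](vv_decomp N 0) addrK.
rewrite E -[X in _ --> X]subr0; apply: cvgB; first exact: cvg_cst.
apply: (@squeeze_cvgr _ _ _ _ (cst 0) (fun N => Cb * mu ^+ N)).
- near=> N; have := iter_bound N 0; by rewrite eqxx mulr1.
- exact: cvg_cst.
- rewrite -(mulr0 Cb); apply: cvgMr; apply: cvg_expr.
  by rewrite ger0_norm ?mu_lt1 // ltW // mu_gt0.
Unshelve. all: by end_near.
Qed.

Lemma series_final :
  (\sum_(0 <= n <oo) (MM n 0 / 2)%:E)%E = ((2 * theta_dnu d nu)^-1)%:E.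
Proof.
have th : theta_dnu d nu = 1 - xx 1 by rewrite /theta_dnu Delta_yy.
have Cv : (2 * theta_dnu d nu)^-1 = vv 0 / 2.
  by rewrite th /vv /= mulr1 /C0 invfM mulrC.
have hS : (fun N => \sum_(0 <= n < N) (MM n 0 / 2)) @ \oo --> vv 0 / 2.
  have -> : (fun N => \sum_(0 <= n < N) (MM n 0 / 2)) =
            (fun N => (\sum_(0 <= n < N) MM n 0) / 2).
    by apply/funext => N; rewrite mulr_suml.
  by apply: cvgMl; exact: S_cvg.
have -> : (fun N => (\sum_(0 <= n < N) (MM n 0 / 2)%:E)%E) =
          EFin \o (fun N => \sum_(0 <= n < N) (MM n 0 / 2)).
  by apply/funext => N; rewrite /= sumEFin.
rewrite EFin_lim; last by apply/cvg_ex; eexists; exact: hS.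
rewrite (cvg_lim _ hS) //; congr (_%:E); exact: (esym Cv).
Qed.

End ChainB.
End T3.
Import T3.

Theorem proposition4p1 (R : realType) (d : nat) (nu : R) :
  (3 <= d)%N -> 0 < nu ->
  collision_local_time d nu 0 = ((2 * theta_dnu d nu)^-1)%:E.
Proof.
move=> hd hnu.
rewrite (collision_series d nu (ltW hnu)); last by apply: leq_trans hd.
exact: (@series_final R d nu hd hnu).
Qed.
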